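(* Let $n\ge 4$ and $r_1\ge r_2\ge\cdots\ge r_n>0$. If $r_4+\cdots+r_n<r_3$, then there exists a homothetic packing of $n$ cubes with radii $r_1,\ldots,r_n$ and at least $4n-11$ face-to-face contacts (and hence more than $3n-3$ face-to-face contacts when $n\ge 9$).
   Context: Let $C=\{(x,y,z):-1\le x,y,z\le 1\}\subset\mathbb{R}^3$. A homothetic cube packing with radii $r_1,\ldots,r_n$ is a set $\{C_1,\ldots,C_n\}$ with $C_i=r_iC+p_i$, $p_i\in\mathbb{R}^3$, whose interiors are pairwise disjoint. A face-to-face contact is an unordered pair $\{i,j\}$, $i\ne j$, such that $C_i\cap C_j$ is a $2$-dimensional convex set. *)

(* Defs.v *)
From HB Require Import structures.
From mathcomp Require Import all_boot all_order all_algebra.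
From mathcomp Require Import all_classical all_reals all_analysis.
From mathcomp Require Import matrix_topology matrix_normedtype.
Import numFieldNormedType.Exports.
Set Implicit Arguments. Unset Strict Implicit. Unset Printing Implicit Defensive.
Import Order.TTheory GRing.Theory Num.Theory.
Local Open Scope ring_scope.
Local Open Scope classical_set_scope.

Definition unit_cube (R : realType) : set 'rV[R]_3 :=
  [set x | forall k : 'I_3, -1 <= x ord0 k <= 1].

Definition hcube (R : realType) (r : R) (p : 'rV[R]_3) : set 'rV[R]_3 :=
  (fun c => r *: c + p) @` @unit_cube R.

Definition aff_indep (R : realType) (k : nat) (v : 'I_k.+1 -> 'rV[R]_3) : Prop :=
  \rank (\matrix_(i < k) (v (lift ord0 i) - v ord0)) = k.

Definition convex_set3 (R : realType) (S : set 'rV[R]_3) : Prop :=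
  forall x y, S x -> S y -> forall t : R, 0 <= t <= 1 -> S (t *: x + (1 - t) *: y).

(* S is a 2-dimensional convex set: convex, its affine hull has dimension 2
   (contains 3 but not 4 affinely independent points). *)
Definition convex_dim2 (R : realType) (S : set 'rV[R]_3) : Prop :=
  convex_set3 S /\
  (exists v : 'I_3 -> 'rV[R]_3, (forall i, S (v i)) /\ aff_indep v) /\
  ~ (exists v : 'I_4 -> 'rV[R]_3, (forall i, S (v i)) /\ aff_indep v).

Definition hom_cube_packing (R : realType) (n : nat) (r : nat -> R)
    (p : nat -> 'rV[R]_3) : Prop :=
  forall i j, (i < n)%N -> (j < n)%N -> i <> j ->
    interior (hcube (r i) (p i)) `&` interior (hcube (r j) (p j)) = set0.

Definition ftf_contact (R : realType) (r : nat -> R) (p : nat -> 'rV[R]_3)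
    (i j : nat) : Prop :=
  i <> j /\ convex_dim2 (hcube (r i) (p i) `&` hcube (r j) (p j)).

(* Main.v *)
Require Import Defs.
From HB Require Import structures.
From mathcomp Require Import all_boot all_order all_algebra.
From mathcomp Require Import all_classical all_reals all_analysis.
From mathcomp Require Import matrix_topology matrix_normedtype.
From mathcomp Require Import lra zify.
Import numFieldNormedType.Exports.
Import Order.TTheory GRing.Theory Num.Theory.
Set Implicit Arguments. Unset Strict Implicit.
Local Open Scope ring_scope.
Local Open Scope classical_set_scope.

Definition box (R : realType) (lo hi : 'I_3 -> R) : set 'rV[R]_3 :=
  [set x | forall k, lo k <= x ord0 k <= hi k].
Lemma box_dim2 (R : realType) (lo hi : 'I_3 -> R) (k0 j l : 'I_3) :
  j != l -> j != k0 -> l != k0 -> lo k0 = hi k0 ->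
  (forall k, lo k <= hi k) -> lo j < hi j -> lo l < hi l ->
  convex_dim2 (box lo hi).
Proof.
move=> jl jk lk ek leh hj hl; split; [|split].
- move=> x y Hx Hy t /andP[t0 t1] k; rewrite !mxE.
  have /andP[a b] := Hx k; have /andP[c d] := Hy k.
  apply/andP; split; nra.
- pose v (i : 'I_3) : 'rV[R]_3 := \row_k (if (i == 1 :> nat) && (k == j) then hi k
     else if (i == 2 :> nat) && (k == l) then hi k else lo k).
  exists v; split.
    move=> i k; rewrite !mxE; case: ifP => _; first by rewrite leh lexx.
    by case: ifP => _; rewrite ?leh lexx.
  rewrite /aff_indep.
  apply/eqP; apply/row_freeP.
  exists (\matrix_(i < 3, c < 2) (if (c == 0 :> nat) && (i == j) then (hi j - lo j)^-1
            else if (c == 1 :> nat) && (i == l) then (hi l - lo l)^-1 else 0)).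
  apply/matrixP => a b; rewrite !mxE.
  under eq_bigr do rewrite !mxE.
  have dj : hi j - lo j != 0 by rewrite subr_eq0 gt_eqF.
  have dl : hi l - lo l != 0 by rewrite subr_eq0 gt_eqF.
  have lj : l != j by rewrite eq_sym.
  case: a => [[|[|//]] ?]; case: b => [[|[|//]] ?] /=.
  + rewrite (bigD1 j) //= big1 ?addr0 /= ?eqxx ?(negbTE jl) ?(negbTE lj) ?mulfV ?subrr ?mul0r ?mulr0 //.
    by move=> i /negbTE ->; rewrite ?andbF ?mulr0 ?subrr ?mul0r.
  + rewrite (bigD1 j) //= big1 ?addr0 /= ?eqxx ?(negbTE jl) ?(negbTE lj) ?mulfV ?subrr ?mul0r ?mulr0 //.
    by move=> i /negbTE ->; rewrite ?andbF ?mulr0 ?subrr ?mul0r.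
  + rewrite (bigD1 l) //= big1 ?addr0 /= ?eqxx ?(negbTE jl) ?(negbTE lj) ?mulfV ?subrr ?mul0r ?mulr0 //.
    by move=> i /negbTE ->; rewrite ?andbF ?mulr0 ?subrr ?mul0r.
  + rewrite (bigD1 l) //= big1 ?addr0 /= ?eqxx ?(negbTE jl) ?(negbTE lj) ?mulfV ?subrr ?mul0r ?mulr0 //.
    by move=> i /negbTE ->; rewrite ?andbF ?mulr0 ?subrr ?mul0r.
- move=> [v [Hv Hr]].
  move: Hr; rewrite /aff_indep; set M := (X in \rank X) => Hr.
  have : row_free M by rewrite /row_free Hr.
  rewrite row_free_unit unitmxE (expand_det_col _ k0) big1 ?unitr0 // => i _.
  rewrite /M !mxE.
  have e : forall w, box lo hi w -> w ord0 k0 = lo k0.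
    move=> w /(_ k0); rewrite -ek => /andP[a b]; by apply/eqP; rewrite eq_le a b.
  by rewrite !e // subrr mul0r.
Qed.
Lemma hcube_box (R : realType) (r : R) p : 0 < r ->
  hcube r p = box (fun k => p ord0 k - r) (fun k => p ord0 k + r).
Proof.
move=> r0; apply/seteqP; split => x.
  case=> c Hc <- k; rewrite !mxE; have := Hc k; move=> /andP[h1 h2].
  apply/andP; split; nra.
move=> Hx; exists (r^-1 *: (x - p)).
  move=> k; rewrite !mxE; have /andP[h1 h2] := Hx k.
  have ri : 0 < r^-1 by rewrite invr_gt0.
  have e : r * r^-1 = 1 by rewrite mulfV // gt_eqF.
  apply/andP; split; nra.
by rewrite scalerA mulfV ?gt_eqF // scale1r addrNK.
Qed.
Lemma boxI (R : realType) (lo1 hi1 lo2 hi2 : 'I_3 -> R) : box lo1 hi1 `&` box lo2 hi2 =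
  box (fun k => Num.max (lo1 k) (lo2 k)) (fun k => Num.min (hi1 k) (hi2 k)).
Proof.
apply/seteqP; split => x.
  case=> H1 H2 k; have /andP[a b] := H1 k; have /andP[c d] := H2 k.
  by rewrite ge_max le_min a b c d.
move=> H; split=> k; have := H k; rewrite ge_max le_min => /andP[/andP[a b] /andP[c d]];
  by rewrite ?a ?b ?c ?d.
Qed.

Lemma contact (R : realType) (r s : R) (p q : 'rV[R]_3) (k0 : 'I_3) : 0 < r -> 0 < s ->
  p ord0 k0 + r = q ord0 k0 - s ->
  (forall j, j != k0 -> p ord0 j - r < q ord0 j + s /\ q ord0 j - s < p ord0 j + r) ->
  convex_dim2 (hcube r p `&` hcube s q).
Proof.
move=> r0 s0 ek Hj; rewrite !hcube_box // boxI.
have [j [l [jl jk lk]]] : exists j l : 'I_3, [/\ j != l, j != k0 & l != k0].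
  case: k0 {ek Hj} => [[|[|[|//]]] ?].
  - by exists (@Ordinal 3 1 isT), (@Ordinal 3 2 isT).
  - by exists (@Ordinal 3 0 isT), (@Ordinal 3 2 isT).
  - by exists (@Ordinal 3 0 isT), (@Ordinal 3 1 isT).
apply: (@box_dim2 _ _ _ k0 j l) => //.
- rewrite (max_idPr _) ?(min_idPl _) //; lra.
- move=> k; rewrite ge_max !le_min.
  case: (eqVneq k k0) => [->|/Hj [h1 h2]]; apply/andP; split; apply/andP; split; lra.
- rewrite gt_max !lt_min; have [h1 h2] := Hj _ jk.
  by apply/andP; split; apply/andP; split; lra.
- rewrite gt_max !lt_min; have [h1 h2] := Hj _ lk.
  by apply/andP; split; apply/andP; split; lra.
Qed.
Lemma near_pos (R : realType) (P : R -> Prop) : (\forall t \near (0:R), P t) -> exists t : R, 0 < t /\ P t.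
Proof.
move=> /nbhs_ballP [e /= e0 He]; exists (e/2); split; first by lra.
apply: He; rewrite -ball_normE /= sub0r normrN ger0_norm; lra.
Qed.
Lemma sep_int (R : realType) (S T : set 'rV[R]_3) (k : 'I_3) (c : R) :
  (forall x, S x -> x ord0 k <= c) -> (forall x, T x -> c <= x ord0 k) ->
  interior S `&` interior T = set0.
Proof.
move=> HS HT; apply/seteqP; split => // x [iS iT].
have Tx : T x := nbhs_singleton iT.
pose f := fun t : R => x + t *: delta_mx ord0 k.
have cf : f t @[t --> (0:R)] --> x.
  rewrite -[x in _ --> x]addr0 /f; apply: cvgD; first exact: cvg_cst.
  rewrite -[X in _ --> X](scale0r (delta_mx ord0 k)); apply: cvgZr_tmp; exact: cvg_id.
have := cf _ iS; move/near_pos => [t [t0 St]].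
have := HS _ St; have := HT _ Tx; rewrite /f !mxE !eqxx /=; lra.
Qed.

Lemma sepc (R : realType) (r s : R) (p q : 'rV[R]_3) (k : 'I_3) : 0 < r -> 0 < s ->
  p ord0 k + r <= q ord0 k - s ->
  interior (hcube r p) `&` interior (hcube s q) = set0.
Proof.
move=> r0 s0 h; apply: (@sep_int _ _ _ k (p ord0 k + r)); rewrite ?hcube_box //.
  by move=> x /(_ k) /andP[].
by move=> x /(_ k) /andP[a _]; apply: le_trans a.
Qed.
Lemma sepc' (R : realType) (r s : R) (p q : 'rV[R]_3) (k : 'I_3) : 0 < r -> 0 < s ->
  q ord0 k + s <= p ord0 k - r ->
  interior (hcube r p) `&` interior (hcube s q) = set0.
Proof. by move=> r0 s0 h; rewrite setIC; apply: (@sepc _ _ _ _ _ k). Qed.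
Lemma contact' (R : realType) (r s : R) (p q : 'rV[R]_3) (k0 : 'I_3) : 0 < r -> 0 < s ->
  q ord0 k0 + s = p ord0 k0 - r ->
  (forall j, j != k0 -> p ord0 j - r < q ord0 j + s /\ q ord0 j - s < p ord0 j + r) ->
  convex_dim2 (hcube r p `&` hcube s q).
Proof.
move=> r0 s0 e H; rewrite setIC; apply: (@contact _ _ _ _ _ k0) => // j /H [? ?]; split; lra.
Qed.

Local Close Scope classical_set_scope.

Definition mkv (R : realType) (x y z : R) : 'rV[R]_3 := \row_(k < 3) nth 0 [:: x; y; z] k.
Definition aa (R : realType) (r : nat -> R) (i : nat) : R := 2 * \sum_(3 <= l < i) r l.
Definition pos (R : realType) (r : nat -> R) (d : R) (i : nat) : 'rV[R]_3 :=
  if i == 0%N then mkv (r 0%N) (r 0%N) (- r 0%N)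
  else if i == 1%N then mkv (r 1%N) (- r 1%N) (d + r 1%N)
  else if i == 2%N then mkv (r 2%N) (r 2%N) (r 2%N)
  else mkv (aa r i + r i) (- r i) (d - r i).

Lemma posS (R : realType) (r : nat -> R) d i : (3 <= i)%N ->
  pos r d i = mkv (aa r i + r i) (- r i) (d - r i).
Proof. by rewrite /pos; case: i => [|[|[|]]]. Qed.

Lemma aaS (R : realType) (r : nat -> R) i : (3 <= i)%N -> aa r i.+1 = aa r i + 2 * r i.
Proof. by move=> h; rewrite /aa big_nat_recr //= mulrDr. Qed.

Lemma aa_split (R : realType) (r : nat -> R) i j : (3 <= i)%N -> (i <= j)%N ->
  aa r j = aa r i + 2 * \sum_(i <= l < j) r l.
Proof. by move=> h1 h2; rewrite /aa (@big_cat_nat _ _ _ i) //= mulrDr. Qed.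

Theorem proposition25 (R : realType) (n : nat) (r : nat -> R) :
  (4 <= n)%N ->
  (forall i j, (i <= j)%N -> (j < n)%N -> r j <= r i) ->
  (forall i, (i < n)%N -> 0 < r i) ->
  \sum_(3 <= i < n) r i < r 2%N ->
  exists p : nat -> 'rV[R]_3,
    hom_cube_packing n r p /\
    exists E : {set 'I_n * 'I_n},
      (4 * n - 11 <= #|E|)%N /\
      forall e, e \in E -> (e.1 < e.2)%N /\ ftf_contact r p e.1 e.2.
Proof.
move=> n4 hmono hpos hsum.
set d := r n.-1.
have dpos : 0 < d by apply: hpos; lia.
have dle : forall i, (i < n)%N -> d <= r i by move=> i hi; apply: hmono; lia.
have r0 : 0 < r 0%N by apply: hpos; lia.
have r1 : 0 < r 1%N by apply: hpos; lia.
have r2 : 0 < r 2%N by apply: hpos; lia.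
have r01 : r 1%N <= r 0%N by apply: hmono; lia.
have r12 : r 2%N <= r 1%N by apply: hmono; lia.
have d2 : d <= r 2%N by apply: dle; lia.
have aa0 : forall i, (3 <= i)%N -> (i < n)%N -> 0 <= aa r i /\ aa r i + 2 * r i < 2 * r 2%N.
  move=> i h3 hn; split.
    rewrite /aa mulr_ge0 // big_nat_cond sumr_ge0 // => l /andP[/andP[_ hl] _].
    by apply/ltW/hpos; lia.
  rewrite -aaS //.
  have e := @aa_split _ r i.+1 n ltac:(lia) ltac:(lia).
  have t : 0 <= \sum_(i.+1 <= l < n) r l.
    rewrite big_nat_cond sumr_ge0 // => l /andP[/andP[_ hl] _].
    by apply/ltW/hpos; lia.
  have : aa r n = 2 * \sum_(3 <= i < n) r i by [].
  lra.
have aagap : forall i j, (3 <= i)%N -> (i < j)%N -> (j < n)%N -> aa r i + 2 * r i <= aa r j.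
  move=> i j h3 hij hj; rewrite -aaS //.
  have e := @aa_split _ r i.+1 j ltac:(lia) ltac:(lia).
  have t : 0 <= \sum_(i.+1 <= l < j) r l.
    rewrite big_nat_cond sumr_ge0 // => l /andP[/andP[_ hl] _].
    by apply/ltW/hpos; lia.
  lra.
pose o0 := @Ordinal 3 0 isT.
pose o1 := @Ordinal 3 1 isT.
pose o2 := @Ordinal 3 2 isT.
exists (pos r d); split.
  move=> i j hi hj hij.
  wlog lt : i j hi hj hij / (i < j)%N.
    move=> W; case: (ltngtP i j) => h; first exact: W.
      by rewrite setIC; apply: W => //; lia.
    by [].
  have ri := hpos _ hi; have rj := hpos _ hj.
  case: i lt hi hij ri => [|[|[|i]]] lt hi hij ri;
  case: j lt hj hij rj => [|[|[|j]]] lt hj hij rj //.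
  - by apply: (@sepc _ _ _ _ _ o2) => //; rewrite /pos /mkv !mxE /=; lra.
  - by apply: (@sepc _ _ _ _ _ o2) => //; rewrite /pos /mkv !mxE /=; lra.
  - by apply: (@sepc' _ _ _ _ _ o1) => //; rewrite /pos /mkv !mxE /=; lra.
  - by apply: (@sepc _ _ _ _ _ o1) => //; rewrite /pos /mkv !mxE /=; lra.
  - by apply: (@sepc' _ _ _ _ _ o2) => //; rewrite /pos /mkv !mxE /=; lra.
  - by apply: (@sepc' _ _ _ _ _ o1) => //; rewrite /pos /mkv !mxE /=; lra.
  - apply: (@sepc _ _ _ _ _ o0) => //; rewrite /pos /mkv !mxE /=.
    have := aagap i.+3 j.+3 isT lt hj; lra.
have n0 : (0 < n)%N by lia.
pose z : 'I_n := Ordinal n0.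
pose g (x : nat * nat) : 'I_n * 'I_n := (insubd z x.1, insubd z x.2).
pose sq : seq (nat * nat) :=
  [seq (0%N, j) | j <- iota 2 (n - 2)] ++ [seq (1%N, j) | j <- iota 2 (n - 2)] ++
  [seq (2%N, j) | j <- iota 3 (n - 3)] ++ [seq (i, i.+1) | i <- iota 3 (n - 4)].
have sq_lt : forall x, x \in sq -> (x.1 < x.2)%N /\ (x.2 < n)%N.
  move=> x; rewrite !mem_cat => /or4P[] /mapP[j]; rewrite mem_iota => /andP[h1 h2] -> /=; split; lia.
have sq_uniq : uniq sq.
  have u1 : forall c m k : nat, uniq [seq (c, j) | j <- iota m k].
    by move=> c m k; rewrite map_inj_uniq ?iota_uniq // => a b [].
  have u2 : uniq [seq (i, i.+1) | i <- iota 3 (n - 4)].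
    by rewrite map_inj_uniq ?iota_uniq // => a b [].
  rewrite !cat_uniq u1 u1 u1 u2 /= !andbT.
  apply/and3P; split.
  - apply/hasPn => x hx; apply/negP => /mapP[k _ ek]; move: hx.
    by rewrite ek !mem_cat => /or3P[] /mapP[j]; rewrite mem_iota => /andP[h1 _] [e1 e2]; lia.
  - apply/hasPn => x hx; apply/negP => /mapP[k _ ek]; move: hx.
    by rewrite ek !mem_cat => /orP[] /mapP[j]; rewrite mem_iota => /andP[h1 _] [e1 e2]; lia.
  - apply/hasPn => x hx; apply/negP => /mapP[k _ ek]; move: hx.
    by rewrite ek => /mapP[j]; rewrite mem_iota => /andP[h1 _] [e1 e2]; lia.
exists [set x in map g sq]; split.
  rewrite cardsE (card_uniqP _).
    by rewrite size_map !size_cat !size_map !size_iota; lia.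
  rewrite map_inj_in_uniq // => x y hx hy [e1 e2].
  have [_ hx2] := sq_lt _ hx; have [_ hy2] := sq_lt _ hy.
  move: e1 e2 => /(congr1 val) e1 /(congr1 val) e2.
  have [hx1 _] := sq_lt _ hx; have [hy1 _] := sq_lt _ hy.
  rewrite !val_insubd (ltn_trans hx1 hx2) (ltn_trans hy1 hy2) hx2 hy2 in e1 e2.
  clear hx hy; move: e1 e2; case: x {hx1 hx2} => a b; case: y {hy1 hy2} => c e /= -> ->.
  by [].
move=> e; rewrite inE => /mapP[x hx ->].
have [hx1 hx2] := sq_lt _ hx.
rewrite /= !val_insubd (ltn_trans hx1 hx2) hx2; split => //.
split; first by move=> h; rewrite h ltnn in hx1.
have rx1 := hpos _ (ltn_trans hx1 hx2); have rx2 := hpos _ hx2.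
move: hx hx1 hx2 rx1 rx2; rewrite !mem_cat => /or4P[] /mapP[j]; rewrite mem_iota => /andP[h1 h2] -> /= hx1 hx2 rx1 rx2.
- case: j h1 h2 hx1 hx2 rx1 rx2 => [|[|[|j]]] //= h1 h2 hx1 hx2 rx1 rx2.
  + apply: (@contact _ _ _ _ _ o2) => //; first by rewrite /pos /mkv !mxE /=; lra.
    by case=> [[|[|[|//]]] ?] //= _; rewrite /pos /mkv !mxE /=; split; lra.
  + have [a1 a2] := aa0 j.+3 isT hx2; have dj := dle _ hx2.
    apply: (@contact' _ _ _ _ _ o1) => //; first by rewrite /pos /mkv !mxE /=; lra.
    by case=> [[|[|[|//]]] ?] //= _; rewrite /pos /mkv !mxE /=; split; lra.
- case: j h1 h2 hx1 hx2 rx1 rx2 => [|[|[|j]]] //= h1 h2 hx1 hx2 rx1 rx2.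
  + apply: (@contact _ _ _ _ _ o1) => //; first by rewrite /pos /mkv !mxE /=; lra.
    by case=> [[|[|[|//]]] ?] //= _; rewrite /pos /mkv !mxE /=; split; lra.
  + have [a1 a2] := aa0 j.+3 isT hx2; have dj := dle _ hx2.
    apply: (@contact' _ _ _ _ _ o2) => //; first by rewrite /pos /mkv !mxE /=; lra.
    by case=> [[|[|[|//]]] ?] //= _; rewrite /pos /mkv !mxE /=; split; lra.
- case: j h1 h2 hx1 hx2 rx1 rx2 => [|[|[|j]]] //= h1 h2 hx1 hx2 rx1 rx2.
  have [a1 a2] := aa0 j.+3 isT hx2; have dj := dle _ hx2.
  apply: (@contact' _ _ _ _ _ o1) => //; first by rewrite /pos /mkv !mxE /=; lra.
  by case=> [[|[|[|//]]] ?] //= _; rewrite /pos /mkv !mxE /=; split; lra.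
- case: j h1 h2 hx1 hx2 rx1 rx2 => [|[|[|j]]] //= h1 h2 hx1 hx2 rx1 rx2.
  have ea := @aaS _ r j.+3 isT.
  have [a1 a2] := aa0 j.+3 isT (ltn_trans hx1 hx2).
  apply: (@contact _ _ _ _ _ o0) => //; first by rewrite /pos /mkv !mxE /=; lra.
  by case=> [[|[|[|//]]] ?] //= _; rewrite /pos /mkv !mxE /=; split; lra.
Qed.
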